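(* Let $r\in\{2,3\}$. There exists $\eta_0>0$ such that for every $0<\eta<\eta_0$ there is $n_0=n_0(\eta,r)$ such that every $r$-uniform hypergraph $H$ on $n>n_0$ vertices with $|E(H)|\geq \eta\binom{n}{r}$ contains a copy of $K^{(r)}(t)$, where $t=\eta(\log n)^{1/(r-1)}$.
   Context: An $r$-uniform hypergraph has edges that are $r$-element subsets of its vertex set. $K^{(r)}(t)$ denotes the complete balanced $r$-partite $r$-uniform hypergraph: vertex set partitioned into $r$ classes each of size $t$, and edges all $r$-sets with exactly one vertex in each class. $\log$ is base $2$. *)

(* Defs.v *)
From Stdlib Require Import Reals.
From mathcomp Require Import all_boot.
Set Implicit Arguments.
Unset Strict Implicit.
Unset Printing Implicit Defensive.

Definition uniform (n r : nat) (E : {set {set 'I_n}}) : Prop :=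
  forall e, e \in E -> #|e| = r.

Definition contains_Krt (n r t : nat) (E : {set {set 'I_n}}) : Prop :=
  exists V : 'I_r -> {set 'I_n},
    (forall i, #|V i| = t) /\
    (forall i j, i != j -> [disjoint V i & V j]) /\
    (forall g : 'I_r -> 'I_n, (forall i, g i \in V i) ->
        [set g i | i in 'I_r] \in E).

Definition log2 (x : R) : R := Rdiv (ln x) (ln 2).

(* Main.v *)
Require Import Defs.
From Stdlib Require Import Reals Lra Lia Psatz ZArith.
Ltac Rring := ring.
Ltac Rfield := field.
From mathcomp Require Import all_boot all_algebra zify ring.
Delimit Scope R_scope with Re.

Section RealPart.
Local Open Scope R_scope.

Lemma ln_lt_x x : 0 < x -> ln x < x.
Proof. move=> hx; have := exp_ineq1_le (ln x); rewrite exp_ln //; lra. Qed.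

Lemma ln_le_mono x y : 0 < x -> x <= y -> ln x <= ln y.
Proof.
move=> hx hxy; case: (Rle_lt_or_eq_dec _ _ hxy) => h.
  by apply: Rlt_le; apply: ln_increasing.
by rewrite h; apply: Rle_refl.
Qed.

Lemma ln_lt_2sqrt z : 0 < z -> ln z < 2 * sqrt z.
Proof.
move=> hz.
have hs : 0 < sqrt z by apply: sqrt_lt_R0.
have e : ln z = 2 * ln (sqrt z).
  by rewrite -{1}(sqrt_sqrt z (Rlt_le _ _ hz)) ln_mult //; Rring.
rewrite e; have := ln_lt_x _ hs; lra.
Qed.

Lemma exp_le_of_ln a b : 0 < a -> 0 < b -> ln a <= ln b -> a <= b.
Proof.
move=> ha hb h; case: (Rle_or_lt a b) => // hlt.
have := ln_increasing _ _ hb hlt; lra.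
Qed.

Lemma exists_nat_ge x : exists N : nat, x <= INR N.
Proof.
have [h1 _] := archimed x.
exists (Z.to_nat (up x)).
case: (Z_lt_le_dec (up x) 0) => hz.
  have : IZR (up x) < 0 by apply: IZR_lt.
  have := pos_INR (Z.to_nat (up x)); lra.
rewrite INR_IZR_INZ Z2Nat.id //; lra.
Qed.

Lemma key (Bv beta C : R) : 1 < Bv -> 0 <= beta -> beta * ln Bv <= 1/2 -> 0 <= C ->
  exists N : nat, forall n : nat, (N <= n)%nat -> forall k t : nat,
   INR k <= beta * ln (INR n) + C -> INR t <= ln (INR n) ->
   INR (S t) * Bv ^ k <= INR n.
Proof.
move=> hB hb hbB hC.
have lB : 0 < ln Bv by rewrite -ln_1; apply: ln_increasing; lra.
set K := C * ln Bv.
have K0 : 0 <= K by rewrite /K; nra.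
set Y0 := (2 * K + 5) ^ 2.
have [N hN] := exists_nat_ge (exp Y0).
exists N => n hn k t hk ht.
have eY : 0 < exp Y0 by apply: exp_pos.
have hnN : INR N <= INR n by apply: le_INR; apply/leP.
have n0 : 0 < INR n by lra.
set y := ln (INR n) in hk ht *.
have hy : Y0 <= y.
  by rewrite -(ln_exp Y0); apply: ln_le_mono => //; lra.
have y0 : 0 <= y by rewrite /Y0 in hy; nra.
set u := sqrt (y + 1).
have uu : u * u = y + 1 by apply: sqrt_sqrt; lra.
have u0 : 0 <= u by apply: sqrt_pos.
have uK : 2 * K + 5 <= u.
  case: (Rle_or_lt (2 * K + 5) u) => // h.
  rewrite /Y0 in hy; nra.
have t1 : 0 < INR (S t) by apply: lt_0_INR; lia.
have A1 : ln (INR (S t)) < 2 * u.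
  apply: (@Rle_lt_trans _ (ln (y + 1))).
    by apply: ln_le_mono => //; rewrite S_INR; lra.
  by apply: ln_lt_2sqrt; lra.
have A2 : INR k * ln Bv <= y / 2 + K.
  have : INR k * ln Bv <= (beta * y + C) * ln Bv by apply: Rmult_le_compat_r; lra.
  rewrite /K; nra.
have A3 : 2 * u + y / 2 + K <= y by nra.
have Bk : 0 < Bv ^ k by apply: pow_lt; lra.
apply: exp_le_of_ln => //; first by apply: Rmult_lt_0_compat.
rewrite ln_mult // ln_pow; last by lra.
rewrite -/y; lra.
Qed.

Lemma eta_bound eta (p : nat) : 0 < eta -> eta < / 10000000 -> (1 <= p)%nat ->
  INR p <= / eta + 1 -> eta * ln (INR (1536 * p)) <= 1/8.
Proof.
move=> e0 e1 p1 hp.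
have ie : 10000000 < / eta.
  rewrite -(Rinv_inv 10000000); apply: Rinv_lt_contravar => //; nra.
have p0 : 1 <= INR p by apply: (le_INR 1); apply/leP.
rewrite mult_INR.
have h1 : ln (INR 1536 * INR p) <= ln (3072 * / eta).
  apply: ln_le_mono; first by apply: Rmult_lt_0_compat; [apply: lt_0_INR; lia | lra].
  have -> : INR 1536 = 1536 by simpl; Rring.
  lra.
have x0 : 0 < 3072 * / eta by nra.
have h2 := ln_lt_2sqrt _ x0.
set s := sqrt (3072 * / eta) in h2.
have ss : s * s = 3072 * / eta by apply: sqrt_sqrt; lra.
have s0 : 0 <= s by apply: sqrt_pos.
have es : eta * (s * s) = 3072 by rewrite ss; Rfield; lra.
have h3 : 16 * eta * s <= 1.
  case: (Rle_or_lt (16 * eta * s) 1) => // h.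
  have : 1 < (16 * eta * s) * (16 * eta * s) by nra.
  have -> : (16 * eta * s) * (16 * eta * s) = 256 * eta * (eta * (s * s)) by Rring.
  rewrite es.
  have : eta < 1/10000000 by lra.
  lra.
have : eta * ln (INR 1536 * INR p) <= eta * (2 * s) by apply: Rmult_le_compat_l; lra.
lra.
Qed.

End RealPart.

Set Implicit Arguments. Unset Strict Implicit. Unset Printing Implicit Defensive.

Lemma leq_expr a b e : a <= b -> a ^ e <= b ^ e.
Proof. by move=> h; elim: e => [|e IH] //; rewrite !expnS leq_mul. Qed.

Lemma ffact_lb n m : (n - m) ^ m <= n ^_ m.
Proof.
elim: m n => [|m IH] n; first by rewrite expn0 ffactn0.
rewrite ffactnS expnS.
have h := IH n.-1.
have e : n.-1 - m = n - m.+1 by lia.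
rewrite e in h.
apply: leq_mul => //; lia.
Qed.

Lemma ffact_ub n m : n ^_ m <= n ^ m.
Proof.
elim: m n => [|m IH] n; first by rewrite expn0 ffactn0.
rewrite ffactnS expnS leq_mul2l; apply/orP; right.
apply: leq_trans (IH _) _; apply: leq_expr; lia.
Qed.

Lemma bin_lb n d t : 'C(n,t) * (d - t) ^ t <= 'C(d,t) * n ^ t.
Proof.
rewrite -(@leq_pmul2r t`!) ?fact_gt0 //.
rewrite mulnAC bin_ffact [X in _ <= X]mulnAC bin_ffact mulnC.
by apply: leq_mul; [exact: ffact_lb | exact: ffact_ub].
Qed.

Lemma card_sum (I : finType) (P : pred I) : #|[set i | P i]| = \sum_i (P i : nat).
Proof.
rewrite -sum1_card big_mkcond /=; apply: eq_bigr => i _.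
by rewrite inE; case: (P i).
Qed.

Lemma subset_card_exists (T : finType) (A : {set T}) m : m <= #|A| ->
  exists B : {set T}, B \subset A /\ #|B| = m.
Proof.
move=> h.
have : 0 < #|[set B : {set T} | B \subset A & #|B| == m]| by rewrite cards_draws bin_gt0.
case/card_gt0P => B; rewrite !inE => /andP [sB /eqP cB]; by exists B.
Qed.

Lemma pig (I T : finType) (N : I -> {set T}) (t m D : nat) :
  t <= #|T| ->
  m.-1 * #|T| ^ t < #|[set i | D <= #|N i|]| * (D - t) ^ t ->
  exists S : {set T}, #|S| = t /\
    exists A : {set I}, #|A| = m /\ forall i, i \in A -> S \subset N i.
Proof.
move=> tn H.
have key : \sum_(S : {set T} | #|S| == t) #|[set i | S \subset N i]|
           = \sum_i 'C(#|N i|, t).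
  under [LHS]eq_bigr => S _ do rewrite (@card_sum I (fun i => S \subset N i)).
  rewrite exchange_big /=.
  apply: eq_bigr => i _.
  rewrite -cards_draws (@card_sum _ (fun S : {set T} => (S \subset N i) && (#|S| == t))) [LHS]big_mkcond /=.
  apply: eq_bigr => S _.
  by case: (_ \subset _); case: (_ == _).
case: (boolP [exists S : {set T}, (#|S| == t) && (m <= #|[set i | S \subset N i]|)]).
  move/existsP => [S /andP [/eqP cS hm]].
  have [A [sA cA]] := subset_card_exists hm.
  exists S; split => //; exists A; split => // i iA.
  by have := subsetP sA i iA; rewrite inE.
move/existsPn => hall.
have h1 : \sum_(S : {set T} | #|S| == t) #|[set i | S \subset N i]|
          <= 'C(#|T|, t) * m.-1.
  apply: leq_trans (_ : \sum_(S : {set T} | #|S| == t) m.-1 <= _).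
    apply: leq_sum => S cS; have := hall S; rewrite cS /= -ltnNge; lia.
  rewrite -card_draws sum_nat_const.
  by apply: eq_leq; congr (_ * _); apply: eq_card => S; rewrite inE.
have h2 : #|[set i | D <= #|N i|]| * 'C(D, t) <= \sum_i 'C(#|N i|, t).
  rewrite -sum_nat_const.
  rewrite big_mkcond; apply: leq_sum => i _; rewrite inE; case: ifP => // h; exact: leq_bin2l.
have h3 := bin_lb #|T| D t.
have Cpos : 0 < 'C(#|T|, t) by rewrite bin_gt0.
have h4 : 'C(#|T|, t) * (#|[set i | D <= #|N i|]| * (D - t) ^ t)
          <= 'C(#|T|, t) * (m.-1 * #|T| ^ t).
  apply: leq_trans (_ : #|[set i | D <= #|N i|]| * ('C(D,t) * #|T| ^ t) <= _).
    by rewrite mulnCA leq_mul2l h3 orbT.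
  rewrite !mulnA; apply: leq_mul => //.
  by apply: leq_trans h2 _; rewrite -key.
by move: h4; rewrite leq_pmul2l // leqNgt H.
Qed.

Lemma markov (I T : finType) (N : I -> {set T}) D :
  \sum_i #|N i| <= #|[set i | D <= #|N i|]| * #|T| + #|I| * D.
Proof.
rewrite (bigID (fun i => D <= #|N i|)) /=.
apply: leq_add.
  apply: leq_trans (_ : \sum_(i | D <= #|N i|) #|T| <= _).
    by apply: leq_sum => i _; exact: max_card.
  rewrite sum_nat_const; apply: eq_leq; congr (_ * _); apply: eq_card => i; rewrite inE.
  done.
apply: leq_trans (_ : \sum_i D <= _).
  rewrite [X in X <= _]big_mkcond /=; apply: leq_sum => i _.
  case: ifP => // h; move: h; rewrite -ltnNge => /ltnW. done.
by rewrite sum_nat_const.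
Qed.

Lemma bip (T : finType) (R : rel T) (t D : nat) :
  (forall x, ~~ R x x) -> t <= #|T| ->
  #|T| * t.-1 * #|T| ^ t < (\sum_x #|[set y | R x y]| - #|T| * D) * (D - t) ^ t ->
  exists X Y : {set T}, [/\ #|X| = t, #|Y| = t, [disjoint X & Y] &
     forall x y, x \in X -> y \in Y -> R x y].
Proof.
move=> irr tn H.
have hm := markov (fun x => [set y | R x y]) D.
set g := #|[set i | D <= #|[set y | R i y]| ]| in hm.
set sm := \sum_x #|[set y | R x y]| in H hm.
have H' : t.-1 * #|T| ^ t < g * (D - t) ^ t.
  have h1 : sm - #|T| * D <= g * #|T|.
    rewrite leq_subLR; apply: leq_trans hm _; rewrite addnC leq_add2r.
    by rewrite mulnC.
  have h2 : #|T| * (t.-1 * #|T| ^ t) < #|T| * (g * (D - t) ^ t).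
    rewrite mulnA; apply: leq_trans H _.
    by rewrite mulnCA mulnA leq_mul2r h1 orbT.
  by move: h2; rewrite ltn_mul2l => /andP [].
have [S [cS [A [cA hA]]]] := pig tn H'.
exists A, S; split => //.
  rewrite disjoint_subset; apply/subsetP => z zA; rewrite inE; apply/negP => zS.
  by have := subsetP (hA z zA) z zS; rewrite inE (negbTE (irr z)).
by move=> x y xA yS; have := subsetP (hA x xA) y yS; rewrite inE.
Qed.

Lemma card_sumS (T : finType) (A : {set T}) : #|A| = \sum_j (j \in A : nat).
Proof. by rewrite -sum1_card big_mkcond /=; apply: eq_bigr => j _; case: (j \in A). Qed.

Lemma sum_card_pairs (I T : finType) (N : I -> {set T}) :
  \sum_i #|N i| = #|[set p : I * T | p.2 \in N p.1]|.
Proof.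
rewrite (@card_sum _ (fun p : I * T => p.2 \in N p.1)) -(pair_bigA _ (fun i j => (j \in N i : nat))) /=.
by apply: eq_bigr => i _; rewrite card_sumS.
Qed.

Lemma lb2 (T : finType) (E : {set {set T}}) :
  (forall e, e \in E -> #|e| = 2) ->
  #|E| <= \sum_x #|[set y | [set x; y] \in E]|.
Proof.
move=> uE; rewrite sum_card_pairs.
set P := [set p : T * T | _].
apply: leq_trans (leq_imset_card (fun p : T * T => [set p.1; p.2]) P).
apply: subset_leq_card; apply/subsetP => e eE.
have /cards2P [x [y [_ ex]]] : #|e| == 2 by rewrite uE.
apply/imsetP; exists (x, y) => //.
by rewrite !inE /= -ex.
Qed.

Lemma lb3 (T : finType) (E : {set {set T}}) :
  (forall e, e \in E -> #|e| = 3) ->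
  #|E| <= \sum_(p : T * T) #|[set z | [set p.1; p.2; z] \in E]|.
Proof.
move=> uE; rewrite sum_card_pairs.
set P := [set q : (T * T) * T | _].
apply: leq_trans (leq_imset_card (fun q : (T * T) * T => [set q.1.1; q.1.2; q.2]) P).
apply: subset_leq_card; apply/subsetP => e eE.
have : 0 < #|e| by rewrite uE.
case/card_gt0P => x xe.
have c2 : #|e :\ x| == 2.
  have := cardsD1 x e; rewrite xe uE //= => h; apply/eqP; lia.
have /cards2P [y [z [_ ex]]] := c2.
have ee : e = [set x; y; z].
  by rewrite -setUA -ex setD1K.
apply/imsetP; exists ((x, y), z) => //.
by rewrite !inE /= -ee.
Qed.

Lemma bin2_eq n : 'C(n,2) * 2 = n * n.-1.
Proof. by rewrite -[2]/(2`!) bin_ffact !ffactnS ffactn0 muln1. Qed.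

Lemma bin3_eq n : 'C(n,3) * 6 = n * n.-1 * n.-2.
Proof. by rewrite -[6]/(3`!) bin_ffact !ffactnS ffactn0 muln1 mulnA. Qed.

Lemma imset2 (T : finType) (g : 'I_2 -> T) :
  [set g i | i in 'I_2] = [set g ord0; g (Ordinal (isT : 1 < 2))].
Proof.
apply/setP => z; rewrite !inE; apply/imsetP/orP.
  case=> [[[|[|k]]] //= hk] _ ->; [left | right]; apply/eqP; congr g; exact: val_inj.
by case=> /eqP ->; [exists ord0 | exists (Ordinal (isT : 1 < 2))].
Qed.

Lemma imset3 (T : finType) (g : 'I_3 -> T) :
  [set g i | i in 'I_3] = [set g ord0; g (Ordinal (isT : 1 < 3)); g (Ordinal (isT : 2 < 3))].
Proof.
apply/setP => z; rewrite !inE -orbA; apply/imsetP/or3P.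
  case=> [[[|[|[|k]]]] //= hk] _ ->; [apply: Or31 | apply: Or32 | apply: Or33]; apply/eqP; congr g; exact: val_inj.
by case=> /eqP ->; [exists ord0 | exists (Ordinal (isT : 1 < 3)) | exists (Ordinal (isT : 2 < 3))].
Qed.
Lemma sq_le n : 2 <= n -> n * n <= 2 * (n * n.-1).
Proof. move=> h; nia. Qed.
Lemma l_kX n p cnt D : n * n <= 4 * (p * cnt) -> D * (16 * p) <= n -> n * n <= 8 * p * (cnt - n * D).
Proof.
move=> h1 h2.
have h3 : 16 * (p * (n * D)) <= n * n.
  have := leq_mul (leqnn n) h2. 
  have -> : n * (D * (16 * p)) = 16 * (p * (n * D)) by ring.
  done.
rewrite -mulnA mulnBr.
move: h1 h3; generalize (p * cnt) (p * (n * D)) (n * n); intros; lia.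
Qed.
Lemma l_kY n p t D : t.+1 * (32 * p) <= n -> n < D.+1 * (16 * p) -> n <= (D - t) * (32 * p).
Proof.
move=> h1 h2.
have e1 : t.+1 * (32 * p) = 2 * (t * (16 * p)) + 2 * (16 * p) by ring.
have e2 : D.+1 * (16 * p) = D * (16 * p) + 16 * p by ring.
have e3 : (D - t) * (32 * p) = 2 * (D * (16 * p)) - 2 * (t * (16 * p)).
  by rewrite mulnBl; congr (_ - _); ring.
rewrite e3; move: h1 h2; rewrite e1 e2; generalize (t * (16 * p)) (D * (16 * p)) (16 * p); intros; lia.
Qed.

Lemma main2 (n t p : nat) (E : {set {set 'I_n}}) :
  @uniform n 2 E -> 'C(n,2) <= p * #|E| -> 0 < t -> 0 < p ->
  t.+1 * (32 * p) ^ t.+1 <= n -> @contains_Krt n 2 t E.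
Proof.
move=> uE hC t0 p0 hn.
pose R : rel 'I_n := fun x y => [set x; y] \in E.
have irr : forall x, ~~ R x x.
  by move=> x; rewrite /R setUid; apply/negP => h; have := uE _ h; rewrite cards1.
have hE : #|E| <= \sum_x #|[set y | R x y]| := lb2 uE.
set cnt := \sum_x #|[set y | R x y]| in hE.
set b := 32 * p.
set Q := b ^ t.
set P := n ^ t.
have bQ : b ^ t.+1 = b * Q by rewrite expnS.
rewrite bQ in hn.
have Q1 : 0 < Q by rewrite expn_gt0 /b; lia.
have hn1 : t.+1 * b <= n by apply: leq_trans hn; rewrite leq_mul2l leq_pmulr // orbT.
have tb : t.+1 <= t.+1 * b by rewrite leq_pmulr // /b; lia.
have n2 : 2 <= n by lia.
set D := n %/ (16 * p).
have d1 : D * (16 * p) <= n := leq_trunc_div _ _.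
have d2 : n < D.+1 * (16 * p) by apply: ltn_ceil; lia.
have c2 := bin2_eq n.
have hpE : p * #|E| <= p * cnt by rewrite leq_mul2l hE orbT.
have k0 : n * n <= 4 * (p * cnt).
  have := sq_le n2; rewrite -c2; lia.
have kX : n * n <= 8 * p * (cnt - n * D) := l_kX k0 d1.
have kY : n <= (D - t) * b := l_kY hn1 d2.
have kYP : P <= (D - t) ^ t * Q by rewrite /P /Q -expnMn; apply: leq_expr.
have tn : t <= #|'I_n| by rewrite card_ord; lia.
have H : #|'I_n| * t.-1 * #|'I_n| ^ t < (cnt - #|'I_n| * D) * (D - t) ^ t.
  rewrite card_ord -/P.
  set Xv := cnt - n * D in kX *; set Yv := (D - t) ^ t in kYP *.
  have k1 : n * n * P <= (8 * p * Xv) * (Yv * Q) := leq_mul kX kYP.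
  have k2 : n * (t.+1 * (b * Q)) * P <= n * n * P.
    by rewrite leq_mul2r leq_mul2l hn !orbT.
  have P1 : 0 < P by rewrite expn_gt0; lia.
  have k3 : (8 * p * Q) * (n * t.-1 * P) < n * (t.+1 * (b * Q)) * P.
    have e1 : (8 * p * Q) * (n * t.-1 * P) = (n * P * Q) * (8 * p * t.-1) by ring.
    have e2 : n * (t.+1 * (b * Q)) * P = (n * P * Q) * (t.+1 * b) by ring.
    rewrite e1 e2 ltn_pmul2l; last by rewrite !muln_gt0; apply/andP; split => //; apply/andP; split => //; lia.
    have -> : t.+1 * b = p * (32 * t.+1) by rewrite /b; ring.
    have -> : 8 * p * t.-1 = p * (8 * t.-1) by ring.
    rewrite ltn_pmul2l //; lia.
  have : (8 * p * Q) * (n * t.-1 * P) < (8 * p * Q) * (Xv * Yv).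
    apply: (leq_trans k3); apply: leq_trans k2 _; apply: leq_trans k1 _.
    by apply: eq_leq; ring.
  by rewrite ltn_pmul2l // !muln_gt0; apply/andP; split => //; lia.
have [X [Y [cX cY dXY hXY]]] := bip irr tn H.
exists (fun i : 'I_2 => if i == ord0 then X else Y); split; [|split].
- by move=> i; case: (i == ord0).
- move=> [[|[|i]] hi] [[|[|j]] hj] //= _; last by rewrite disjoint_sym.
- move=> g hg; rewrite imset2.
  apply: (hXY (g ord0) (g (Ordinal (isT : 1 < 2)))).
    by have := hg ord0.
  by have := hg (Ordinal (isT : 1 < 2)).
Qed.

Lemma l_kYg n q t D : t.+1 * (2 * q) <= n -> n < D.+1 * q -> n <= (D - t) * (2 * q).
Proof.
move=> h1 h2.
have e1 : t.+1 * (2 * q) = 2 * (t * q) + 2 * q by ring.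
have e2 : D.+1 * q = D * q + q by ring.
have e3 : (D - t) * (2 * q) = 2 * (D * q) - 2 * (t * q).
  by rewrite mulnBl; congr (_ - _); ring.
rewrite e3; move: h1 h2; rewrite e1 e2; generalize (t * q) (D * q) q; intros; lia.
Qed.

Lemma final_step n t c b Xv Yv : 0 < t -> 0 < c -> 0 < n -> 0 < b ->
  n * n <= c * Xv -> n ^ t <= Yv * b ^ t -> c * t.-1 < t.+1 * b ->
  t.+1 * b ^ t.+1 <= n -> n * t.-1 * n ^ t < Xv * Yv.
Proof.
move=> t0 c0 n0 b0 kX kYP hc hn.
set P := n ^ t in kYP *; set Q := b ^ t in kYP.
have Q1 : 0 < Q by rewrite expn_gt0 b0.
have P1 : 0 < P by rewrite expn_gt0 n0.
rewrite expnS -/Q in hn.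
have k1 : n * n * P <= (c * Xv) * (Yv * Q) := leq_mul kX kYP.
have k2 : n * (t.+1 * (b * Q)) * P <= n * n * P.
  by rewrite leq_mul2r leq_mul2l hn !orbT.
have k3 : (c * Q) * (n * t.-1 * P) < n * (t.+1 * (b * Q)) * P.
  have e1 : (c * Q) * (n * t.-1 * P) = (n * P * Q) * (c * t.-1) by ring.
  have e2 : n * (t.+1 * (b * Q)) * P = (n * P * Q) * (t.+1 * b) by ring.
  by rewrite e1 e2 ltn_pmul2l // !muln_gt0 n0 P1 Q1.
have : (c * Q) * (n * t.-1 * P) < (c * Q) * (Xv * Yv).
  apply: (leq_trans k3); apply: leq_trans k2 _; apply: leq_trans k1 _.
  by apply: eq_leq; ring.
by rewrite ltn_pmul2l // muln_gt0 c0 Q1.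
Qed.
Lemma cube_le n : 6 <= n -> n * n * n <= 2 * (n * n.-1 * n.-2).
Proof.
move=> h; have [k ek] : exists k, n = k + 6 by exists (n - 6); lia.
have e1 : n.-1 = k + 5 by lia.
have e2 : n.-2 = k + 4 by lia.
rewrite e2 e1 ek.
have -> : 2 * ((k + 6) * (k + 5) * (k + 4)) = (k + 6) * (k + 6) * (k + 6) + (k * k * k + 12 * (k * k) + 40 * k + 24) by ring.
exact: leq_addr.
Qed.

Lemma l_g1 n p cnt1 g1 D1 : 0 < n -> n * n * n <= 12 * (p * cnt1) ->
  D1 * (48 * p) <= n -> cnt1 <= g1 * n + n * n * D1 -> n * n <= 16 * p * g1.
Proof.
move=> n0 h1 h2 h3.
have h4 : 48 * (p * (n * n * D1)) <= n * n * n.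
  have := leq_mul (leqnn (n * n)) h2.
  by have -> : n * n * (D1 * (48 * p)) = 48 * (p * (n * n * D1)) by ring.
have h5 : p * cnt1 <= p * g1 * n + p * (n * n * D1).
  by rewrite -mulnA -mulnDr leq_mul2l h3 orbT.
have h6 : n * n * n <= 16 * p * g1 * n.
  move: h1 h4 h5; have -> : 16 * p * g1 * n = 16 * (p * g1 * n) by ring.
  generalize (p * cnt1) (p * (n * n * D1)) (p * g1 * n) (n * n * n); intros; lia.
by move: h6; rewrite leq_pmul2r.
Qed.

Lemma l_kX2 n K m D2 : 0 < K -> n * n < m.+1 * K -> 16 * K <= n ->
  D2 * (8 * K) <= n -> n * n <= 8 * K * (m - n * D2).
Proof.
move=> K0 h1 h2 h3.
have h4 : 8 * (K * (n * D2)) <= n * n.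
  have := leq_mul (leqnn n) h3.
  by have -> : n * (D2 * (8 * K)) = 8 * (K * (n * D2)) by ring.
have n0 : 0 < n by lia.
have h5 : 16 * K <= n * n by apply: leq_trans h2 (leq_pmulr _ n0).
have e : 8 * K * (m - n * D2) = 8 * (K * m) - 8 * (K * (n * D2)).
  by rewrite mulnBr; congr (_ - _); ring.
have e2 : m.+1 * K = K * m + K by ring.
rewrite e; move: h1 h4 h5; rewrite e2.
generalize (K * m) (K * (n * D2)) (n * n) K; intros; lia.
Qed.

Lemma card3_eq (T : finType) (x y z : T) : #|[set x; y; z]| = 3 ->
  [/\ x != y, x != z & y != z].
Proof.
rewrite -setUA cardsU1 cards2 !inE negb_or.
by case: (x =P y); case: (x =P z); case: (y =P z).
Qed.

Lemma main3 (n t p : nat) (E : {set {set 'I_n}}) :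
  @uniform n 3 E -> 'C(n,3) <= p * #|E| -> 0 < t -> 0 < p ->
  t.+1 * (16 * (96 * p) ^ t.+1) ^ t.+1 <= n -> @contains_Krt n 3 t E.
Proof.
move=> uE hC t0 p0 hn.
pose N (q : 'I_n * 'I_n) := [set z | [set q.1; q.2; z] \in E].
have hE : #|E| <= \sum_q #|N q| := lb3 uE.
set cnt1 := \sum_q #|N q| in hE.
set b1 := 96 * p.
set K := b1 ^ t.+1.
set b2 := 16 * K.
have b10 : 0 < b1 by rewrite /b1; lia.
have K0 : 0 < K by rewrite expn_gt0 b10.
have b20 : 0 < b2 by rewrite /b2; lia.
have hb1K : b1 <= K by rewrite /K expnS leq_pmulr // expn_gt0 b10.
have hb2 : b2 <= b2 ^ t.+1 by rewrite expnS leq_pmulr // expn_gt0 b20.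
have hnb2 : t.+1 * b2 <= n by apply: leq_trans hn; rewrite leq_mul2l hb2 orbT.
have hnK : 16 * K <= n by apply: leq_trans hnb2; rewrite /b2 leq_pmull.
have hnb1 : t.+1 * (2 * (48 * p)) <= n.
  apply: leq_trans hnb2; rewrite leq_mul2l; apply/orP; right.
  by rewrite /b2; move: hb1K; rewrite /b1; lia.
have n6 : 6 <= n by move: hnb1; lia.
have n0 : 0 < n by lia.
have c3 := bin3_eq n.
have hpE : p * #|E| <= p * cnt1 by rewrite leq_mul2l hE orbT.
have k0 : n * n * n <= 12 * (p * cnt1).
  have := cube_le n6; rewrite -c3; lia.
set D1 := n %/ (48 * p).
have d1 : D1 * (48 * p) <= n := leq_trunc_div _ _.
have d2 : n < D1.+1 * (48 * p) by apply: ltn_ceil; lia.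
have hm := markov N D1.
rewrite card_prod card_ord -/cnt1 in hm.
set g1 := #|[set q | D1 <= #|N q|]| in hm.
have hg1 : n * n <= 16 * p * g1 := l_g1 n0 k0 d1 hm.
have kY1 : n <= (D1 - t) * (2 * (48 * p)) := l_kYg hnb1 d2.
have kYP1 : n ^ t <= (D1 - t) ^ t * b1 ^ t.
  by rewrite -expnMn; apply: leq_expr; rewrite /b1; move: kY1; lia.
set X1 := g1 * (D1 - t) ^ t.
have nt0 : 0 < n ^ t by rewrite expn_gt0 n0.
set m := X1 %/ n ^ t.
have hm1 : X1 < m.+1 * n ^ t := ltn_ceil _ nt0.
have hm2 : m * n ^ t <= X1 := leq_trunc_div _ _.
have F1 : n * n < m.+1 * K.
  have k1 : n * n * n ^ t <= X1 * (16 * p * b1 ^ t).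
    have := leq_mul hg1 kYP1.
    by have -> : 16 * p * g1 * ((D1 - t) ^ t * b1 ^ t) = X1 * (16 * p * b1 ^ t) by rewrite /X1; ring.
  have k2 : X1 * (16 * p * b1 ^ t) < m.+1 * n ^ t * (16 * p * b1 ^ t).
    by rewrite ltn_pmul2r // !muln_gt0 p0 expn_gt0 b10.
  have k3 : n * n * n ^ t < n ^ t * (m.+1 * (16 * p * b1 ^ t)).
    apply: leq_ltn_trans k1 _; apply: leq_trans k2 _.
    by apply: eq_leq; ring.
  have k4 : n * n < m.+1 * (16 * p * b1 ^ t).
    by move: k3; rewrite mulnC ltn_pmul2l.
  apply: leq_trans k4 _; rewrite leq_mul2l; apply/orP; right.
  rewrite /K expnS leq_mul2r; apply/orP; right.
  by rewrite /b1 leq_mul2r; apply/orP; right.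
have m1 : 0 < m.
  case: (posnP m) => // m0; move: F1; rewrite m0 mul1n => h.
  have hKn : K <= n * n.
    apply: leq_trans (_ : K <= n) _; first by apply: leq_trans hnK; apply: leq_pmull.
    exact: leq_pmulr.
  by have := leq_ltn_trans hKn h; rewrite ltnn.
have Hpig : m.-1 * #|'I_n| ^ t < g1 * (D1 - t) ^ t.
  by rewrite card_ord; apply: leq_trans hm2; rewrite ltn_pmul2r // ltn_predL.
have tn : t <= #|'I_n|.
  rewrite card_ord; apply: leq_trans (leqnSn t) _; apply: leq_trans _ hnb1.
  by apply: leq_pmulr; rewrite !muln_gt0 p0.
have [Z [cZ [A [cA hA]]]] := pig tn Hpig.
clearbody m X1 g1 D1.
have bad : forall x y z, z \in Z -> (x, y) \in A -> [/\ x != y, x != z & y != z].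
  move=> x y z zZ xyA.
  have := subsetP (hA _ xyA) z zZ; rewrite inE /= => eE.
  exact: card3_eq (uE _ eE).
pose R : rel 'I_n := fun x y => (x, y) \in A.
have Z0 : 0 < #|Z| by rewrite cZ.
have irr : forall x, ~~ R x x.
  move=> x; apply/negP => xx; case/card_gt0P: Z0 => z zZ.
  by have [] := bad x x z zZ xx; rewrite eqxx.
have cnt2 : \sum_x #|[set y | R x y]| = m.
  rewrite (sum_card_pairs (fun x => [set y | R x y])) -cA.
  by apply: eq_card => [[x y]]; rewrite !inE /=.
set D2 := n %/ (8 * K).
have d21 : D2 * (8 * K) <= n := leq_trunc_div _ _.
have d22 : n < D2.+1 * (8 * K) by apply: ltn_ceil; rewrite muln_gt0 K0.
have kX2 : n * n <= 8 * K * (m - n * D2) := l_kX2 K0 F1 hnK d21.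
have e28 : 2 * (8 * K) = b2 by rewrite /b2 mulnA.
have hnb2' : t.+1 * (2 * (8 * K)) <= n by rewrite e28.
have kY2 : n <= (D2 - t) * (2 * (8 * K)) := l_kYg hnb2' d22.
have kYP2 : n ^ t <= (D2 - t) ^ t * b2 ^ t.
  by rewrite -expnMn; apply: leq_expr; rewrite -e28.
have H2 : #|'I_n| * t.-1 * #|'I_n| ^ t <
          (\sum_x #|[set y | R x y]| - #|'I_n| * D2) * (D2 - t) ^ t.
  rewrite card_ord cnt2; apply: (@final_step n t (8 * K) b2) => //.
  - by rewrite muln_gt0 K0.
  - by rewrite /b2; move: K0 t0; clear; nia.
have [X [Y [cX cY dXY hXY]]] := bip irr tn H2.
have X0 : 0 < #|X| by rewrite cX.
have Y0 : 0 < #|Y| by rewrite cY.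
have dXZ : [disjoint X & Z].
  rewrite disjoint_subset; apply/subsetP => x xX; rewrite inE; apply/negP => xZ.
  case/card_gt0P: Y0 => y yY.
  by have [] := bad x y x xZ (hXY x y xX yY); rewrite eqxx.
have dYZ : [disjoint Y & Z].
  rewrite disjoint_subset; apply/subsetP => y yY; rewrite inE; apply/negP => yZ.
  case/card_gt0P: X0 => x xX.
  by have [] := bad x y y yZ (hXY x y xX yY); rewrite eqxx.
pose o1 := Ordinal (isT : 1 < 3).
exists (fun i : 'I_3 => if i == ord0 then X else if i == o1 then Y else Z); split; [|split].
- by move=> i; case: (i == ord0); case: (i == o1).
- move=> [[|[|[|i]]] hi] [[|[|[|j]]] hj] //= _; by rewrite // disjoint_sym.
- move=> g hg; rewrite imset3.
  have h0 := hg ord0; have h1 := hg o1; have h2 := hg (Ordinal (isT : 2 < 3)).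
  rewrite /= in h0 h1 h2.
  have := subsetP (hA _ (hXY _ _ h0 h1)) _ h2.
  by rewrite inE.
Qed.

Lemma contains0 n r (E : {set {set 'I_n}}) : (0 < r)%N -> @contains_Krt n r 0 E.
Proof.
move=> r0; exists (fun _ => set0); split; [|split].
- by move=> i; rewrite cards0.
- by move=> i j _; rewrite disjoint_subset; apply/subsetP => x; rewrite inE.
- by move=> g hg; have := hg (Ordinal r0); rewrite inE.
Qed.

Lemma main2' (n t p : nat) (E : {set {set 'I_n}}) :
  @uniform n 2 E -> 'C(n,2) <= p * #|E| -> 0 < t -> 0 < p ->
  t.+1 * (1536 * p) ^ t.+1 <= n -> @contains_Krt n 2 t E.
Proof.
move=> uE hC t0 p0 hn; apply: main2 uE hC t0 p0 _.
apply: leq_trans hn; rewrite leq_mul2l; apply/orP; right; apply: leq_expr; lia.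
Qed.

Lemma main3' (n t p : nat) (E : {set {set 'I_n}}) :
  @uniform n 3 E -> 'C(n,3) <= p * #|E| -> 0 < t -> 0 < p ->
  t.+1 * (1536 * p) ^ (t.+1 * t.+1) <= n -> @contains_Krt n 3 t E.
Proof.
move=> uE hC t0 p0 hn; apply: main3 uE hC t0 p0 _.
apply: leq_trans hn; rewrite leq_mul2l; apply/orP; right.
have -> : 1536 * p = 16 * (96 * p) by ring.
move: (96 * p) => q.
rewrite [(16 * q ^ _) ^ _]expnMn -expnM [(16 * q) ^ _]expnMn leq_mul2r; apply/orP; right.
by apply: leq_pexp2l => //; apply: leq_pmulr.
Qed.

Lemma INR_expn m k : INR (m ^ k) = (INR m ^ k)%Re.
Proof.
elim: k => [|k IH]; first by rewrite expn0.
by rewrite expnS mulnE mult_INR IH.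
Qed.

Lemma INR_muln a b : INR (a * b) = (INR a * INR b)%Re.
Proof. by rewrite mulnE mult_INR. Qed.

Lemma INR_leq a b : (INR a <= INR b)%Re -> a <= b.
Proof. by move=> h; apply/leP; apply: INR_le. Qed.

Theorem corollary1 :
  forall r : nat, (r = 2 \/ r = 3) ->
  exists eta0 : R, Rlt 0 eta0 /\
  forall eta : R, Rlt 0 eta -> Rlt eta eta0 ->
  exists n0 : nat, forall n : nat, n0 < n ->
  forall E : {set {set 'I_n}}, @uniform n r E ->
  Rge (INR #|E|) (Rmult eta (INR 'C(n, r))) ->
  forall t : nat,
  Rle (INR t) (Rmult eta (Rpower (log2 (INR n)) (Rdiv 1 (INR (r - 1))))) ->
  @contains_Krt n r t E.
Proof.
move=> r hr.
exists (/ 10000000)%Re; split; first by apply: Rinv_0_lt_compat; lra.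
move=> eta e0 e1.
have ie : (10000000 < / eta)%Re.
  rewrite -(Rinv_inv 10000000); apply: Rinv_lt_contravar => //; nra.
pose p := Z.to_nat (up (/ eta)).
have [hu1 hu2] := archimed (/ eta).
have up0 : Z.le 0 (up (/ eta)).
  apply: le_IZR; rewrite /=; lra.
have hpI : INR p = IZR (up (/ eta)) by rewrite /p INR_IZR_INZ Z2Nat.id.
have hp1 : (/ eta < INR p)%Re by rewrite hpI; lra.
have hp2 : (INR p <= / eta + 1)%Re by rewrite hpI; lra.
have p1 : (1 <= p)%N.
  apply/leP; apply: INR_le; rewrite /=; lra.
have eb := eta_bound _ _ e0 e1 p1 hp2.
set B := INR (1536 * p) in eb.
have hB : (1 < B)%Re.
  rewrite /B INR_muln.
  have -> : INR 1536 = 1536%Re by simpl; Rring.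
  have : (1 <= INR p)%Re by apply: (le_INR 1); apply/leP.
  lra.
have lB : (0 < ln B)%Re by rewrite -ln_1; apply: ln_increasing; lra.
have l2 := ln_lt_2.
have il2 : (0 < / ln 2 < 2)%Re.
  split; first by apply: Rinv_0_lt_compat; lra.
  have := Rinv_lt_contravar (/ 2) (ln 2) ltac:(nra) l2; rewrite Rinv_inv; lra.
have ep : (1 <= eta * INR p)%Re.
  have := Rmult_lt_compat_l eta _ _ e0 hp1.
  rewrite Rinv_r; lra.
have hCE : forall n k (E : {set {set 'I_n}}),
    (INR #|E| >= eta * INR 'C(n, k))%Re -> 'C(n, k) <= p * #|E|.
  move=> n k E hE; apply: INR_leq; rewrite INR_muln.
  have := pos_INR 'C(n, k); have := pos_INR #|E|; have := pos_INR p; nra.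
case: hr => ->.
-
  set beta := (eta / ln 2)%Re.
  have hbeta : (0 <= beta)%Re by rewrite /beta; apply: Rlt_le; apply: Rdiv_lt_0_compat; lra.
  have hbB : (beta * ln B <= 1/2)%Re.
    have -> : (beta * ln B = (eta * ln B) * / ln 2)%Re by rewrite /beta /Rdiv; Rring.
    have : (0 <= eta * ln B)%Re by nra.
    nra.
  have [N hN] := key _ _ _ hB hbeta hbB (Rle_0_1).
  exists (N + 2)%N => n hn E uE hE t ht.
  case: (posnP t) => [-> | t0]; first exact: contains0.
  have n1 : (1 < INR n)%Re by apply: (lt_INR 1); apply/ltP; lia.
  have ln0 : (0 < ln (INR n))%Re by rewrite -ln_1; apply: ln_increasing; lra.
  have lg : (0 < log2 (INR n))%Re by rewrite /log2; apply: Rdiv_lt_0_compat; lra.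
  have e21 : Rdiv 1 (INR (2 - 1)) = 1%Re by rewrite /=; Rfield.
  rewrite e21 Rpower_1 // /log2 in ht.
  have ht' : (INR t <= beta * ln (INR n))%Re by rewrite /beta; move: ht; rewrite /Rdiv; lra.
  have hk : (INR t.+1 <= beta * ln (INR n) + 1)%Re by rewrite S_INR; lra.
  have htl : (INR t <= ln (INR n))%Re.
    apply: Rle_trans ht' _.
    have : (beta <= 1)%Re by rewrite /beta /Rdiv; nra.
    nra.
  have := hN n (ltac:(apply/leP; lia)) t.+1 t hk htl.
  rewrite /B -INR_expn -INR_muln => /INR_leq hfin.
  exact: main2' uE (hCE _ _ _ hE) t0 (ltac:(lia)) hfin.
-
  set beta := (2 * (eta * eta) / ln 2)%Re.
  have hbeta : (0 <= beta)%Re.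
    rewrite /beta; apply: Rlt_le; apply: Rdiv_lt_0_compat; nra.
  have hbB : (beta * ln B <= 1/2)%Re.
    have -> : (beta * ln B = 2 * eta * (eta * ln B) * / ln 2)%Re by rewrite /beta /Rdiv; Rring.
    have : (0 <= eta * ln B)%Re by nra.
    have : (eta < 1)%Re by lra.
    move=> h1 h2.
    have : (2 * eta * (eta * ln B) <= 1/4)%Re by nra.
    nra.
  have [N hN] := key _ _ _ hB hbeta hbB (ltac:(lra) : (0 <= 2)%Re).
  exists (N + 2)%N => n hn E uE hE t ht.
  case: (posnP t) => [-> | t0]; first exact: contains0.
  have n1 : (1 < INR n)%Re by apply: (lt_INR 1); apply/ltP; lia.
  have ln0 : (0 < ln (INR n))%Re by rewrite -ln_1; apply: ln_increasing; lra.
  have lg : (0 < log2 (INR n))%Re by rewrite /log2; apply: Rdiv_lt_0_compat; lra.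
  have e31 : Rdiv 1 (INR (3 - 1)) = (/ 2)%Re by rewrite /=; Rfield.
  rewrite e31 Rpower_sqrt // in ht.
  set L := log2 (INR n) in ht lg.
  have sq := sqrt_sqrt L (Rlt_le _ _ lg).
  have sq0 := sqrt_pos L.
  have tp := pos_INR t.
  have t1 : (1 <= INR t)%Re by apply: (le_INR 1); apply/leP.
  have htt : (INR t * INR t <= eta * eta * L)%Re.
    have : (INR t * INR t <= (eta * sqrt L) * (eta * sqrt L))%Re by nra.
    have -> : ((eta * sqrt L) * (eta * sqrt L) = eta * eta * (sqrt L * sqrt L))%Re by Rring.
    by rewrite sq.
  have eL : (eta * eta * L = beta / 2 * ln (INR n))%Re by rewrite /L /log2 /beta; Rfield; lra.
  rewrite eL in htt.
  have hk : (INR (t.+1 * t.+1) <= beta * ln (INR n) + 2)%Re.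
    rewrite INR_muln S_INR; nra.
  have htl : (INR t <= ln (INR n))%Re.
    have : (beta <= 2)%Re.
      rewrite /beta /Rdiv.
      have : (eta * eta <= 1/2)%Re by nra.
      nra.
    nra.
  have := hN n (ltac:(apply/leP; lia)) (t.+1 * t.+1) t hk htl.
  rewrite /B -INR_expn -INR_muln => /INR_leq hfin.
  exact: main3' uE (hCE _ _ _ hE) t0 (ltac:(lia)) hfin.
Qed.
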